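(* Let $k$ be a field and $r$ a positive integer. The free metabelian Lie algebra $F_r$ over $k$ is equationally Noetherian: for every $n\in\mathbb{N}$ and every system $S\subseteq F_r[x_1,\dots,x_n]$ there exists a finite subsystem $S_0\subseteq S$ with $V_{F_r}(S)=V_{F_r}(S_0)$.
   Context: $F_r[X]=F_r\ast F(X)$ is the free product of $F_r$ with the free Lie $k$-algebra on $X=\{x_1,\dots,x_n\}$ (the free $F_r$-algebra on $X$). For $S\subseteq F_r[X]$, $V_{F_r}(S)=\{p\in F_r^n: f(p)=0\ \forall f\in S\}$. *)

(* Defs.v *)
From mathcomp Require Import all_boot all_order all_algebra.
Set Implicit Arguments. Unset Strict Implicit. Unset Printing Implicit Defensive.
Import GRing.Theory.
Local Open Scope ring_scope.

Definition is_lie_bracket (K : fieldType) (V : lmodType K) (br : V -> V -> V) : Prop :=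
  [/\ (forall (a : K) (x y z : V), br (a *: x + y) z = a *: br x z + br y z),
      (forall (a : K) (x y z : V), br z (a *: x + y) = a *: br z x + br z y),
      (forall x : V, br x x = 0) &
      (forall x y z : V, br x (br y z) + br y (br z x) + br z (br x y) = 0)].

Definition is_metabelian (K : fieldType) (V : lmodType K) (br : V -> V -> V) : Prop :=
  forall a b c d : V, br (br a b) (br c d) = 0.

Definition is_lie_hom (K : fieldType) (V W : lmodType K)
  (brV : V -> V -> V) (brW : W -> W -> W) (f : V -> W) : Prop :=
  (forall (a : K) (x y : V), f (a *: x + y) = a *: f x + f y) /\
  (forall x y : V, f (brV x y) = brW (f x) (f y)).

Definition is_free_metabelian (K : fieldType) (r : nat) (M : lmodType K)
  (br : M -> M -> M) (e : 'I_r -> M) : Prop :=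
  [/\ is_lie_bracket br, is_metabelian br &
      forall (W : lmodType K) (brW : W -> W -> W),
        is_lie_bracket brW -> is_metabelian brW ->
        forall g : 'I_r -> W,
          (exists phi : M -> W, is_lie_hom br brW phi /\ forall i, phi (e i) = g i) /\
          (forall phi psi : M -> W, is_lie_hom br brW phi -> is_lie_hom br brW psi ->
              (forall i, phi (e i) = g i) -> (forall i, psi (e i) = g i) ->
              forall x, phi x = psi x)].

(* ---------- F_r[X] = F_r * F(X): Lie terms with constants in M ----------
   Every element of the free product F_r * F(x_1..x_n) is the value of such a
   term (F_r * F(X) is generated by F_r and X as a Lie algebra), and the
   evaluation at p in M^n is the F_r-homomorphism F_r[X] -> F_r
   sending x_i to p_i, i.e. term evaluation. *)
Inductive lterm (K : Type) (M : Type) (n : nat) : Type :=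
  | LConst of M
  | LVar of 'I_n
  | LAdd of lterm K M n & lterm K M n
  | LScale of K & lterm K M n
  | LBr of lterm K M n & lterm K M n.

Fixpoint leval (K : fieldType) (M : lmodType K) (br : M -> M -> M) (n : nat)
  (p : 'I_n -> M) (t : lterm K M n) : M :=
  match t with
  | LConst a => a
  | LVar i => p i
  | LAdd t1 t2 => leval br p t1 + leval br p t2
  | LScale c t1 => c *: leval br p t1
  | LBr t1 t2 => br (leval br p t1) (leval br p t2)
  end.

Definition variety (K : fieldType) (M : lmodType K) (br : M -> M -> M) (n : nat)
  (S : lterm K M n -> Prop) (p : 'I_n -> M) : Prop :=
  forall t, S t -> leval br p t = 0.

(* membership of a term in a finite list of terms (terms carry no eqType) *)
Fixpoint lmem (A : Type) (s : seq A) (t : A) : Prop :=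
  match s with
  | [::] => False
  | u :: s' => u = t \/ lmem s' t
  end.

(* Main.v *)
From HB Require Import structures.
From mathcomp Require Import all_boot all_order all_algebra.
From Stdlib Require Import Classical ClassicalEpsilon.
Require Import Defs.
Set Implicit Arguments. Unset Strict Implicit. Unset Printing Implicit Defensive.
Import GRing.Theory.
Local Open Scope ring_scope.

Lemma mem_cons_r (T : eqType) (a : T) (s : seq T) y : y \in s -> y \in a :: s.
Proof. by rewrite inE => ->; rewrite orbT. Qed.

Section Gen.
Variables (R : pzRingType) (V : lmodType R).
Inductive gen (S : V -> Prop) : V -> Prop :=
| gen_in x : S x -> gen S x
| gen0 : gen S 0
| genD x y : gen S x -> gen S y -> gen S (x + y)
| genZ a x : gen S x -> gen S (a *: x).

Lemma gen_trans (A B : V -> Prop) : (forall x, A x -> gen B x) ->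
  forall x, gen A x -> gen B x.
Proof. move=> H x; elim=> //; by [move=> *; apply: H | constructor | move=> *; constructor | move=> *; constructor]. Qed.

Lemma gen_mono (A B : V -> Prop) : (forall x, A x -> B x) ->
  forall x, gen A x -> gen B x.
Proof. move=> H; apply: gen_trans => x Ax; apply: gen_in; exact: H. Qed.

Lemma genN S x : gen S x -> gen S (- x).
Proof. by move=> Hx; rewrite -scaleN1r; apply: genZ. Qed.

Lemma genB S x y : gen S x -> gen S y -> gen S (x - y).
Proof. by move=> Hx Hy; apply: genD => //; apply: genN. Qed.

Lemma gen_closed (S Z : V -> Prop) : (forall x, S x -> Z x) -> Z 0 ->
  (forall x y, Z x -> Z y -> Z (x + y)) -> (forall a x, Z x -> Z (a *: x)) ->
  forall x, gen S x -> Z x.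
Proof. move=> HS H0 HD HZ x; elim=> //; by auto. Qed.

Definition NS := forall S : V -> Prop, exists s : seq V,
  (forall x, x \in s -> S x) /\ (forall x, S x -> gen (fun y => y \in s) x).

Lemma gen_seq_cat (s t : seq V) x : gen (fun y => y \in s) x ->
  gen (fun y => y \in s ++ t) x.
Proof. apply: gen_mono => y; rewrite mem_cat => ->. by []. Qed.
Lemma gen_seq_catr (s t : seq V) x : gen (fun y => y \in t) x ->
  gen (fun y => y \in s ++ t) x.
Proof. apply: gen_mono => y; rewrite mem_cat => ->; by rewrite orbT. Qed.

Lemma gen_fin1 (S : V -> Prop) x : gen S x -> exists s : seq V,
  (forall y, y \in s -> S y) /\ gen (fun y => y \in s) x.
Proof.
elim.
- move=> y Sy; exists [:: y]; split; first by move=> z; rewrite inE => /eqP->.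
  by apply: gen_in; rewrite inE.
- by exists [::]; split=> //; apply: gen0.
- move=> a b _ [s [Hs Ha]] _ [t [Ht Hb]]; exists (s ++ t); split.
    by move=> z; rewrite mem_cat => /orP[]; [apply: Hs|apply: Ht].
  by apply: genD; [apply: gen_seq_cat | apply: gen_seq_catr].
- move=> a y _ [s [Hs Hy]]; exists s; split=> //; exact: genZ.
Qed.

Lemma gen_fin (S : V -> Prop) (g : seq V) : (forall x, x \in g -> gen S x) ->
  exists s : seq V, (forall y, y \in s -> S y) /\
     forall x, x \in g -> gen (fun y => y \in s) x.
Proof.
elim: g => [|x g IH] H; first by exists [::].
have [s [Hs1 Hs2]] := IH (fun y yg => H y (mem_cons_r _ yg)).
have [t [Ht1 Ht2]] := gen_fin1 (H x (mem_head _ _)).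
exists (s ++ t); split.
  by move=> z; rewrite mem_cat => /orP[]; [apply: Hs1|apply: Ht1].
move=> y; rewrite inE => /orP[/eqP->|yg]; first exact: gen_seq_catr.
exact: gen_seq_cat (Hs2 _ yg).
Qed.

End Gen.

Lemma choose_list (A : eqType) (B : Type) (P : A -> B -> Prop) (s : seq A) :
  (forall a, a \in s -> exists b, P a b) ->
  exists t : seq B, (forall a, a \in s -> exists2 b, lmem t b & P a b) /\
     (forall b, lmem t b -> exists2 a, a \in s & P a b).
Proof.
elim: s => [|a s IH] H; first by exists [::].
have [t [Ht Ht']] := IH (fun y yg => H y (mem_cons_r _ yg)).
have [b Hb] := H a (mem_head _ _).
exists (b :: t); split.
  move=> y; rewrite inE => /orP[/eqP->|ys]; first by exists b => //; left.
  by have [c Hc1 Hc2] := Ht y ys; exists c => //; right.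
move=> y [<-|yt]; first by exists a => //; rewrite inE eqxx.
by have [c Hc1 Hc2] := Ht' y yt; exists c => //; rewrite inE Hc1 orbT.
Qed.

Lemma lmem_cat (T : Type) (s t : seq T) x : lmem (s ++ t) x <-> lmem s x \/ lmem t x.
Proof. elim: s => [|a s IH] /=; [tauto | move: IH; tauto]. Qed.

Lemma choose_list_eq (A B : eqType) (P : A -> B -> Prop) (s : seq A) :
  (forall a, a \in s -> exists b, P a b) ->
  exists t : seq B, (forall a, a \in s -> exists2 b, b \in t & P a b) /\
     (forall b, b \in t -> exists2 a, a \in s & P a b).
Proof.
elim: s => [|a s IH] H; first by exists [::].
have [t [Ht Ht']] := IH (fun y yg => H y (mem_cons_r _ yg)).
have [b Hb] := H a (mem_head _ _).
exists (b :: t); split.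
  move=> y; rewrite inE => /orP[/eqP->|ys]; first by exists b => //; rewrite inE eqxx.
  by have [c Hc1 Hc2] := Ht y ys; exists c => //; rewrite inE Hc1 orbT.
move=> y; rewrite inE => /orP[/eqP->|yt]; first by exists a => //; rewrite inE eqxx.
by have [c Hc1 Hc2] := Ht' y yt; exists c => //; rewrite inE Hc1 orbT.
Qed.

Lemma NS_field (K : fieldType) : NS K^o.
Proof.
move=> S.
case: (classic (exists x : K, S x /\ x != 0)) => [[x [Sx nx]]|N].
  exists [:: x]; split; first by move=> y; rewrite inE => /eqP->.
  move=> y _; have -> : y = (y / x) *: (x : K^o) by rewrite /GRing.scale /= mulfVK.
  by apply: genZ; apply: gen_in; rewrite inE.
exists [::]; split=> // y Sy.
case: (eqVneq y 0) => [->|ny]; first exact: gen0.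
by exfalso; apply: N; exists y.
Qed.

Lemma size_le_coef0 (R : nzRingType) (p : {poly R}) n :
  (size p <= n.+1)%N -> p`_n = 0 -> (size p <= n)%N.
Proof.
move=> H1 H2; rewrite leq_eqVlt in H1; case/orP: H1 => [/eqP E|]; last by [].
have : lead_coef p = 0 by rewrite /lead_coef E.
by move/eqP; rewrite lead_coef_eq0 => /eqP->; rewrite size_poly0.
Qed.

Section Hilbert.
Variable R : comNzRingType.
Hypothesis HR : NS R^o.
Local Notation P := {poly R}.

Lemma NS_poly : NS P^o.
Proof.
move=> S.
pose Ld d (c : R^o) := exists f : P^o, gen S f /\ (size f <= d.+1)%N /\ f`_d = c.
have Ld_cl : forall d c, gen (Ld d) c -> Ld d c.
  move=> d; apply: gen_closed => //.
  - by exists 0; split; [apply: gen0|split; [rewrite size_poly0|rewrite coef0]].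
  - move=> x y [f [Gf [Sf Cf]]] [g [Gg [Sg Cg]]]; exists (f + g); split; first exact: genD.
    split; last by rewrite coefD Cf Cg.
    by apply: leq_trans (size_polyD _ _) _; rewrite geq_max Sf Sg.
  - move=> a x [f [Gf [Sf Cf]]]; exists (a%:P * f); split; first exact: (genZ (a%:P : P) Gf).
    split; last by rewrite coefCM Cf.
    by rewrite mul_polyC; apply: leq_trans (size_scale_leq _ _) Sf.
have Ld_S : forall d c, Ld d c -> Ld d.+1 c.
  move=> d c [f [Gf [Sf Cf]]]; exists (f * 'X); split.
    by rewrite mulrC; exact: (genZ ('X : P) Gf).
  split; last by rewrite coefMX.
  apply: leq_trans (size_polyMleq _ _) _; rewrite size_polyX addn2 /=; by [].
have Ld_le : forall d d' c, (d <= d')%N -> Ld d c -> Ld d' c.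
  move=> d d' c /subnK <-; elim: (d' - d)%N => [|k IH] // H; rewrite addSn; exact: Ld_S (IH H).
pose Lall c := exists d, Ld d c.
have [s [Hs1 Hs2]] := HR Lall.
have [D HD] : exists D, forall c, c \in s -> Ld D c.
  elim: (s) Hs1 => [|a t IH] H; first by exists 0%N.
  have [D1 HD1] := IH (fun y yt => H y (mem_cons_r _ yt)).
  have [d2 Hd2] := H a (mem_head _ _).
  exists (maxn D1 d2) => y; rewrite inE => /orP[/eqP->|yt].
    by apply: Ld_le Hd2; rewrite leq_maxr.
  by apply: Ld_le (HD1 _ yt); rewrite leq_maxl.
have LD : forall c, Lall c -> Ld D c.
  by move=> c /Hs2 Gc; apply: Ld_cl; apply: gen_mono Gc => y /HD.
have HGn : forall n, exists G : seq P^o, (forall g, g \in G -> gen S g) /\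
    forall d, (d < n)%N -> forall c, Ld d c -> exists h : P^o,
       gen (fun y => y \in G) h /\ (size h <= d.+1)%N /\ h`_d = c.
  elim=> [|n [G [HG1 HG2]]]; first by exists [::].
  have [sn [Hsn1 Hsn2]] := HR (Ld n).
  have [t [Ht Ht']] := choose_list_eq (P := fun c (f : P^o) => gen S f /\ (size f <= n.+1)%N /\ f`_n = c) Hsn1.
  exists (G ++ t); split.
    move=> g; rewrite mem_cat => /orP[/HG1 //|gt].
    by have [a _ [? _]] := Ht' g gt.
  move=> d; rewrite ltnS leq_eqVlt => /orP[/eqP->|dn] c Hc; last first.
    have [h [Gh Sh]] := HG2 d dn c Hc; exists h; split=> //; exact: gen_seq_cat.
  move: (Hsn2 c Hc); clear Hc; move: c; apply: gen_closed.
  - move=> a /Ht [b bt [_ [Sb Cb]]]; exists b; split=> //.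
    by apply: gen_seq_catr; apply: gen_in.
  - by exists 0; split; [apply: gen0|split; [rewrite size_poly0|rewrite coef0]].
  - move=> x y [f [Gf [Sf Cf]]] [g [Gg [Sg Cg]]]; exists (f + g); split; first exact: genD.
    split; last by rewrite coefD Cf Cg.
    by apply: leq_trans (size_polyD _ _) _; rewrite geq_max Sf Sg.
  - move=> a x [f [Gf [Sf Cf]]]; exists (a%:P * f); split; first exact: (genZ (a%:P : P) Gf).
    split; last by rewrite coefCM Cf.
    by rewrite mul_polyC; apply: leq_trans (size_scale_leq _ _) Sf.
have [G [HG1 HG2]] := HGn D.+1.
have main : forall m (f : P^o), (size f <= m)%N -> gen S f -> gen (fun y => y \in G) f.
  elim=> [|m IH] f Sf Gf.
    by move: Sf; rewrite leqn0 size_poly_eq0 => /eqP->; apply: gen0.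
  rewrite leq_eqVlt in Sf; case/orP: Sf => [/eqP Sf|]; last by rewrite ltnS => /IH; apply.
  have Hc : Ld (minn m D) f`_m.
    case: (leqP m D) => mD.
      by exists f; rewrite Sf.
    apply: LD; exists m; exists f; by rewrite Sf.
  have [h [Gh [Sh Ch]]] := HG2 (minn m D) (leq_trans (geq_minr m D) (leqnn _)) _ Hc.
  have GSh : gen S h by apply: gen_trans Gh => y /HG1.
  pose k := (m - minn m D)%N.
  have Ekd : (k + minn m D)%N = m by rewrite subnK // geq_minl.
  have -> : f = (f - 'X^k * h) + 'X^k * h by rewrite subrK.
  apply: genD; last exact: (genZ ('X^k : P) Gh).
  apply: IH; last by apply: genB => //; exact: (genZ ('X^k : P) GSh).
  apply: size_le_coef0.
    apply: leq_trans (size_polyD _ _) _; rewrite geq_max Sf leqnn /= size_polyN.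
    apply: leq_trans (size_polyMleq _ _) _; rewrite size_polyXn addSn /=.
    by rewrite -Ekd -addnS leq_add2l.
  rewrite coefB coefXnM.
  have -> : (m < k)%N = false by apply/negbTE; rewrite -leqNgt -Ekd leq_addr.
  have -> : (m - k)%N = minn m D by rewrite -{1}Ekd addKn.
  by rewrite Ch subrr.
have [s0 [Hs01 Hs02]] := gen_fin HG1.
exists s0; split=> // x Sx.
apply: gen_trans (main _ x (leqnn _) (gen_in Sx)) => y; exact: Hs02.
Qed.
End Hilbert.

Section Rows.
Variable R : comNzRingType.
Hypothesis HR : NS R^o.
Variable m : nat.
Local Notation V := 'rV[R]_m.

Definition supp (k : nat) (x : V) := forall j : 'I_m, (k <= j)%N -> x 0 j = 0.

Lemma gen_supp k (S : V -> Prop) : (forall x, S x -> supp k x) ->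
  forall x, gen S x -> supp k x.
Proof.
move=> H; apply: gen_closed => //.
- by move=> j _; rewrite mxE.
- by move=> x y Hx Hy j kj; rewrite mxE Hx // Hy // addr0.
- by move=> a x Hx j kj; rewrite mxE Hx // mulr0.
Qed.

Lemma NS_rows_k k : forall S : V -> Prop, (forall x, S x -> supp k x) ->
  exists s : seq V, (forall x, x \in s -> S x) /\ (forall x, S x -> gen (fun y => y \in s) x).
Proof.
elim: k => [|k IH] S HS.
  exists [::]; split=> // x /HS Sx.
  have -> : x = 0 by apply/rowP => j; rewrite mxE Sx.
  exact: gen0.
case: (ltnP k m) => km; last first.
  apply: IH => x /HS Sx j kj; exfalso; move: (leq_ltn_trans kj (ltn_ord j)); by rewrite ltnNge km.
pose kk := Ordinal km.
pose C (c : R^o) := exists2 x, S x & x 0 kk = c.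
have [cs [Hcs1 Hcs2]] := HR C.
have [xs [Hxs Hxs']] := choose_list_eq (P := fun (c : R^o) (x : V) => S x /\ x 0 kk = c)
  (fun c cc => let: ex_intro2 x Sx Ex := Hcs1 c cc in ex_intro _ x (conj Sx Ex)).
have xsS : forall y, y \in xs -> S y by move=> y /Hxs' [a _ []].
have lift : forall c : R^o, gen (fun y => y \in cs) c ->
    exists2 y : V, gen (fun y => y \in xs) y & y 0 kk = c.
  apply: gen_closed.
  - by move=> c /Hxs [y yx [_ Ey]]; exists y => //; apply: gen_in.
  - by exists 0; [apply: gen0|rewrite mxE].
  - by move=> a b [y Gy Ey] [z Gz Ez]; exists (y + z); [apply: genD|rewrite mxE Ey Ez].
  - by move=> a b [y Gy Ey]; exists (a *: y); [apply: genZ|rewrite mxE Ey].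
pose S' (z : V) := exists x y, [/\ S x, gen (fun y => y \in xs) y, y 0 kk = x 0 kk & z = x - y].
have HS' : forall z, S' z -> supp k z.
  move=> z [x [y [Sx Gy Ey ->]]] j; rewrite leq_eqVlt => /orP[/eqP Ej|kj].
    have -> : j = kk by apply/val_inj; rewrite /= Ej.
    by rewrite !mxE Ey subrr.
  have Sy : supp k.+1 y by apply: gen_supp Gy => w /xsS /HS.
  by rewrite !mxE (HS _ Sx j kj) (Sy j kj) subrr.
have [zs [Hzs1 Hzs2]] := IH S' HS'.
have [ws [Hws Hws']] := choose_list_eq (P := fun (z : V) (x : V) =>
     exists y, [/\ S x, gen (fun y => y \in xs) y, y 0 kk = x 0 kk & z = x - y])
  (fun z zz => let: ex_intro x H := Hzs1 z zz in ex_intro _ x H).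
exists (xs ++ ws); split.
  by move=> x; rewrite mem_cat => /orP[/xsS //|/Hws' [z _ [y [Sx _ _ _]]]].
have zsG : forall z, z \in zs -> gen (fun y => y \in xs ++ ws) z.
  move=> z /Hws [x xw [y [_ Gy _ ->]]]; apply: genB.
    by apply: gen_in; rewrite mem_cat xw orbT.
  exact: gen_seq_cat.
move=> x Sx.
have [y Gy Ey] := lift _ (Hcs2 _ (ex_intro2 _ _ x Sx erefl)).
have -> : x = (x - y) + y by rewrite subrK.
apply: genD; last exact: gen_seq_cat.
apply: gen_trans (Hzs2 _ _) => //; exists x, y; split=> //.
Qed.

Lemma NS_rows : NS V.
Proof. move=> S; apply: (@NS_rows_k m) => x _ j; rewrite leqNgt ltn_ord. by []. Qed.
End Rows.

Fixpoint Q (B : comNzRingType) (k : nat) : comNzRingType :=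
  match k with 0 => B | k.+1 => {poly Q B k} end.

Lemma NS_Q (B : comNzRingType) k : NS B^o -> NS (Q B k)^o.
Proof. move=> HB; elim: k => [|k IH] //=; exact: NS_poly. Qed.

Section Act.
Variables (K : fieldType) (V : lmodType K) (U : V -> Prop).
Hypotheses (U0 : U 0) (UD : forall x y, U x -> U y -> U (x + y))
  (UZ : forall a x, U x -> U (a *: x)).

Definition lin (L : V -> V) := forall a x y, L (a *: x + y) = a *: L x + L y.

Lemma selfadd0 (x : V) : x = x + x -> x = 0.
Proof. by move=> E; apply: (addrI x); rewrite addr0 -E. Qed.

Lemma lin0 L : lin L -> L 0 = 0.
Proof. move=> H; have := H 1 0 0; rewrite !scale1r !addr0; exact: selfadd0. Qed.
Lemma linD L : lin L -> forall x y, L (x + y) = L x + L y.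
Proof. by move=> H x y; have := H 1 x y; rewrite !scale1r. Qed.
Lemma linZ L : lin L -> forall a x, L (a *: x) = a *: L x.
Proof. by move=> H a x; rewrite -(addr0 (a *: x)) H lin0 // addr0. Qed.
Lemma linN L : lin L -> forall x, L (- x) = - L x.
Proof. by move=> H x; rewrite -scaleN1r linZ // scaleN1r. Qed.
Lemma lin_sum L : lin L -> forall (I : Type) (s : seq I) (P : pred I) (F : I -> V),
  L (\sum_(i <- s | P i) F i) = \sum_(i <- s | P i) L (F i).
Proof. move=> H I s P F; apply: (big_morph L (linD H) (lin0 H)). Qed.

Lemma U_sum (I : Type) (s : seq I) (P : pred I) (F : I -> V) :
  (forall i, P i -> U (F i)) -> U (\sum_(i <- s | P i) F i).
Proof. move=> H; elim/big_rec: _ => // i x Pi Ux; exact: UD (H _ Pi) Ux. Qed.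

Record good (B : comNzRingType) (act : B -> V -> V) (Ops : (V -> V) -> Prop) : Prop := Good {
  g_lin : forall r, lin (act r);
  g_add : forall r s v, act (r + s) v = act r v + act s v;
  g_one : forall v, act 1 v = v;
  g_mul : forall r s v, U v -> act (r * s) v = act r (act s v);
  g_U : forall r v, U v -> U (act r v);
  g_com : forall r L v, Ops L -> U v -> act r (L v) = L (act r v);
  g_opslin : forall L, Ops L -> lin L }.

Lemma good_mono B act (O1 O2 : (V -> V) -> Prop) : @good B act O1 ->
  (forall L, O2 L -> O1 L) -> good act O2.
Proof. case=> *; split; by auto. Qed.

Lemma act0 B act O : @good B act O -> forall v, act 0 v = 0.
Proof.
case=> _ Hadd _ _ _ _ _ v; have := Hadd 0 0 v; rewrite addr0; exact: selfadd0.
Qed.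

Section Step.
Variables (B : comNzRingType) (act : B -> V -> V) (Ops : (V -> V) -> Prop) (L : V -> V).
Hypotheses (Hg : good act Ops) (HL : Ops L) (HLU : forall v, U v -> U (L v)).

Definition rho1 (p : {poly B}) (v : V) : V :=
  \sum_(i < size p) act p`_i (iter i L v).

Lemma iterU i v : U v -> U (iter i L v).
Proof. by elim: i => //= i IH Uv; apply: HLU; apply: IH. Qed.

Lemma linL : lin L. Proof. exact: (g_opslin Hg HL). Qed.

Lemma iter_lin i : lin (iter i L).
Proof. elim: i => [|i IH] a x y //=; by rewrite IH linL. Qed.

Lemma rho1_n (p : {poly B}) (v : V) n : (size p <= n)%N ->
  rho1 p v = \sum_(i < n) act p`_i (iter i L v).
Proof.
move=> H; rewrite /rho1 (big_ord_widen n (fun i => act p`_i (iter i L v)) H) big_mkcond.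
apply: eq_bigr => i _; case: ifP => // /negbT; rewrite -leqNgt => Hi.
by rewrite nth_default // (act0 Hg).
Qed.

Lemma rho1_lin p : lin (rho1 p).
Proof.
move=> a x y; rewrite /rho1 scaler_sumr -big_split; apply: eq_bigr => i _ /=.
by rewrite iter_lin (g_lin Hg).
Qed.

Lemma rho1_add p q v : rho1 (p + q) v = rho1 p v + rho1 q v.
Proof.
pose n := maxn (size p) (size q).
rewrite (@rho1_n (p + q) v n) ?(@rho1_n p v n) ?(@rho1_n q v n) ?leq_maxl ?leq_maxr //;
  last exact: size_polyD.
by rewrite -big_split; apply: eq_bigr => i _; rewrite coefD (g_add Hg).
Qed.

Lemma rho1_0 v : rho1 0 v = 0.
Proof. by rewrite /rho1 size_poly0 big_ord0. Qed.

Lemma rho1_C c v : rho1 c%:P v = act c v.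
Proof.
rewrite (@rho1_n _ v 1) ?size_polyC ?leq_b1 // big_ord1 coefC /=. by [].
Qed.

Lemma rho1_one v : rho1 1 v = v.
Proof. by rewrite -polyC1 rho1_C (g_one Hg). Qed.

Lemma rho1_X v : rho1 'X v = L v.
Proof.
rewrite (@rho1_n _ v 2) ?size_polyX // big_ord_recl big_ord1 !coefX /= (act0 Hg) add0r.
exact: (g_one Hg).
Qed.

Lemma rho1_MX p v : rho1 (p * 'X) v = rho1 p (L v).
Proof.
rewrite (@rho1_n _ v (size p).+1); last first.
  by apply: leq_trans (size_polyMleq _ _) _; rewrite size_polyX addn2.
rewrite big_ord_recl coefMX /= (act0 Hg) add0r /rho1; apply: eq_bigr => i _.
by rewrite /bump leq0n add1n coefMX /= add0n -iterS iterSr.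
Qed.

Lemma rho1_CM c p v : U v -> rho1 (c%:P * p) v = act c (rho1 p v).
Proof.
move=> Uv; rewrite (@rho1_n _ v (size p)); last first.
  by rewrite mul_polyC; apply: size_scale_leq.
rewrite /rho1 (lin_sum (g_lin Hg c)); apply: eq_bigr => i _.
by rewrite coefCM (g_mul Hg) //; apply: iterU.
Qed.

Lemma rho1_U p v : U v -> U (rho1 p v).
Proof. move=> Uv; apply: U_sum => i _; apply: (g_U Hg); exact: iterU. Qed.

Lemma rho1_comL p v : U v -> rho1 p (L v) = L (rho1 p v).
Proof.
move=> Uv; rewrite /rho1 (lin_sum linL); apply: eq_bigr => i _.
by rewrite -iterSr iterS (g_com Hg) //; apply: iterU.
Qed.

Lemma rho1_com p L' v : Ops L' -> (forall w, U w -> L (L' w) = L' (L w)) ->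
  (forall w, U w -> U (L' w)) -> U v -> rho1 p (L' v) = L' (rho1 p v).
Proof.
move=> HO HC HU Uv.
have E : forall j, iter j L (L' v) = L' (iter j L v).
  elim=> //= j ->; apply: HC; exact: iterU.
rewrite /rho1 (lin_sum (g_opslin Hg HO)); apply: eq_bigr => i _; rewrite E.
by rewrite (g_com Hg) //; apply: iterU.
Qed.

Lemma rho1_mul p q v : U v -> rho1 (p * q) v = rho1 p (rho1 q v).
Proof.
elim/poly_ind: p q v => [|p c IH] q v Uv; first by rewrite mul0r !rho1_0.
rewrite mulrDl rho1_add rho1_add rho1_CM // rho1_C rho1_MX.
have -> : p * 'X * q = p * (q * 'X) by rewrite mulrAC mulrA.
by rewrite IH // rho1_MX rho1_comL.
Qed.

Lemma good_step : good rho1 (fun L' => [/\ Ops L', (forall w, U w -> L (L' w) = L' (L w))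
   & (forall w, U w -> U (L' w))]).
Proof.
split.
- exact: rho1_lin.
- exact: rho1_add.
- exact: rho1_one.
- exact: rho1_mul.
- exact: rho1_U.
- by move=> r L' v [H1 H2 H3] Uv; apply: rho1_com.
- by move=> L' [H1 _ _]; exact: (g_opslin Hg H1).
Qed.
End Step.
End Act.

Fixpoint embQ (B : comNzRingType) (k : nat) : B -> Q B k :=
  match k return B -> Q B k with 0 => id | k.+1 => fun c => (embQ k c)%:P end.
Fixpoint varQ (B : comNzRingType) (k : nat) (j : nat) : Q B k :=
  match k return Q B k with 0 => 0 | k.+1 => if j == k then 'X else (varQ B k j)%:P end.

Section Iter.
Variables (K : fieldType) (V : lmodType K) (U : V -> Prop).
Hypotheses (U0 : U 0) (UD : forall x y, U x -> U y -> U (x + y)).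
Variables (B : comNzRingType) (act : B -> V -> V) (Ops : (V -> V) -> Prop)
  (ls : nat -> V -> V).

Fixpoint rhoQ k : Q B k -> V -> V :=
  match k return Q B k -> V -> V with 0 => act | k.+1 => rho1 (@rhoQ k) (ls k) end.

Definition OpsQ k L := [/\ Ops L, (forall j, (j < k)%N -> forall w, U w -> ls j (L w) = L (ls j w))
   & forall w, U w -> U (L w)].

Hypotheses (Hg : good U act Ops) (HO : forall j, Ops (ls j))
  (HU : forall j v, U v -> U (ls j v))
  (HC : forall i j w, U w -> ls i (ls j w) = ls j (ls i w)).

Lemma good_Q k : good U (@rhoQ k) (OpsQ k).
Proof.
elim: k => [|k IH] /=.
  by apply: (good_mono Hg) => L [].

have Hk : OpsQ k (ls k) by split; [exact: HO | move=> j _ w Uw; exact: HC | exact: HU].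
have H := good_step U0 UD IH Hk (HU k).
apply: (good_mono H) => L [H1 H2 H3].
split=> //; first by split=> // j jk; exact: H2 (ltnW jk).
by move=> w Uw; apply: H2.
Qed.

Lemma rhoQ_emb k c v : rhoQ (embQ k c) v = act c v.
Proof. elim: k => [|k IH] //=; by rewrite (rho1_C _ (good_Q k)). Qed.

Lemma rhoQ_var k j v : (j < k)%N -> rhoQ (varQ B k j) v = ls j v.
Proof.
elim: k => [|k IH] //= jk; case: eqP => [->|ne]; first exact: (rho1_X _ (good_Q k)).
rewrite (rho1_C _ (good_Q k)); apply: IH.
by move: jk; rewrite ltnS leq_eqVlt => /orP[/eqP|].
Qed.
End Iter.

Section Eps.
Variables (K : fieldType) (V : lmodType K) (U : V -> Prop).
Hypotheses (U0 : U 0) (UD : forall x y, U x -> U y -> U (x + y)).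
Variables (B : comNzRingType) (act : B -> V -> V) (Ops : (V -> V) -> Prop).
Hypothesis (Hg : good U act Ops).
Variables (q : nat) (u : 'I_q -> V).
Hypothesis Hu : forall k, U (u k).

Definition eps (x : 'rV[B]_q) : V := \sum_k act (x 0 k) (u k).

Lemma eps0 : eps 0 = 0.
Proof. by rewrite /eps big1 // => k _; rewrite mxE (act0 Hg). Qed.
Lemma epsD x y : eps (x + y) = eps x + eps y.
Proof. by rewrite /eps -big_split; apply: eq_bigr => k _; rewrite mxE (g_add Hg). Qed.
Lemma epsZ r x : eps (r *: x) = act r (eps x).
Proof.
rewrite /eps (lin_sum (g_lin Hg r)); apply: eq_bigr => k _; rewrite mxE (g_mul Hg) //.
Qed.
Lemma epsU x : U (eps x).
Proof. apply: (U_sum U0 UD) => k _; exact: (g_U Hg). Qed.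
Lemma eps_delta k : eps (delta_mx 0 k) = u k.
Proof.
rewrite /eps (bigD1 k) //= big1 => [|j jk]; first by rewrite mxE !eqxx (g_one Hg) addr0.
by rewrite mxE (negbTE jk) andbF (act0 Hg).
Qed.

Lemma eps_gen (S : 'rV[B]_q -> Prop) : (forall x, S x -> eps x = 0) ->
  forall x, gen S x -> eps x = 0.
Proof.
move=> H; apply: gen_closed => //; first exact: eps0.
- by move=> x y Hx Hy; rewrite epsD Hx Hy addr0.
- by move=> a x Hx; rewrite epsZ Hx (lin0 (g_lin Hg a)).
Qed.
End Eps.

Section Scal.
Variables (K : fieldType) (V : lmodType K) (U : V -> Prop).
Hypotheses (U0 : U 0) (UD : forall x y, U x -> U y -> U (x + y))
  (UZ : forall a x, U x -> U (a *: x)).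
Definition sact (c : K) (v : V) := c *: v.
Definition sOps (L : V -> V) := lin L /\ forall v, U v -> U (L v).
Lemma good_sact : good U (sact : K -> V -> V) sOps.
Proof.
split; rewrite /sact.
- by move=> r a x y; rewrite scalerDr !scalerA mulrC.
- by move=> r s v; rewrite scalerDl.
- by move=> v; rewrite scale1r.
- by move=> r s v _; rewrite scalerA.
- by move=> r v Uv; apply: UZ.
- by move=> r L v [HL _] _; rewrite linZ.
- by move=> L [].
Qed.

Variable alpha : nat -> K.
Definition als (j : nat) (v : V) := alpha j *: v.

Fixpoint scQ k : Q K k -> K :=
  match k return Q K k -> K with 0 => id | k.+1 => fun p => \sum_(i < size p) @scQ k p`_i * alpha k ^+ i end.

Lemma rhoQ_scal k (c : Q K k) v : @rhoQ _ _ _ sact als k c v = @scQ k c *: v.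
Proof.
elim: k c v => [|k IH] c v //=.
rewrite /rho1 scaler_suml; apply: eq_bigr => i _; rewrite IH -scalerA.
congr (_ *: _); elim: (nat_of_ord i) => [|j IHj] /=; first by rewrite scale1r.
by rewrite IHj /als scalerA exprS mulrC.
Qed.
End Scal.

Definition asb (P : Prop) : bool := if excluded_middle_informative P then true else false.
Lemma asbP (P : Prop) : reflect P (asb P).
Proof. rewrite /asb; case: excluded_middle_informative => H; by constructor. Qed.

Section Lie.
Variables (K : fieldType) (r : nat) (M : lmodType K) (br : M -> M -> M) (e : 'I_r -> M).
Hypothesis Hlie : is_lie_bracket br.
Hypothesis Hmeta : is_metabelian br.

Lemma brl_lin y : lin (fun x => br x y).
Proof. by case: Hlie => H _ _ _ a x z /=; rewrite H. Qed.
Lemma brr_lin x : lin (br x).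
Proof. by case: Hlie => _ H _ _. Qed.
Lemma brxx x : br x x = 0. Proof. by case: Hlie. Qed.
Lemma br_anti x y : br x y = - br y x.
Proof.
have := brxx (x + y).
rewrite (linD (brl_lin _)) !(linD (brr_lin _)) !brxx add0r addr0 => /eqP.
by rewrite addr_eq0 => /eqP.
Qed.
Lemma br_jac x y z : br x (br y z) + br y (br z x) + br z (br x y) = 0.
Proof. by case: Hlie. Qed.

Inductive Dset : M -> Prop :=
| D_gen i j : Dset (br (e i) (e j))
| D_0 : Dset 0
| D_add x y : Dset x -> Dset y -> Dset (x + y)
| D_scale a x : Dset x -> Dset (a *: x)
| D_T i x : Dset x -> Dset (br (e i) x).

Lemma D_opp x : Dset x -> Dset (- x).
Proof. by move=> H; rewrite -scaleN1r; apply: D_scale. Qed.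
Lemma D_sum (I : Type) (s : seq I) (P : pred I) (F : I -> M) :
  (forall i, P i -> Dset (F i)) -> Dset (\sum_(i <- s | P i) F i).
Proof. move=> H; elim/big_rec: _ => [|i x Pi Dx]; [exact: D_0 | exact: D_add (H _ Pi) Dx]. Qed.

Lemma D_br_brk a b d : Dset d -> br (br a b) d = 0.
Proof.
elim.
- by move=> i j; apply: Hmeta.
- exact: (lin0 (brr_lin _)).
- by move=> x y _ Hx _ Hy; rewrite (linD (brr_lin _)) Hx Hy addr0.
- by move=> c x _ Hx; rewrite (linZ (brr_lin _)) Hx scaler0.
- by move=> i x _ _; apply: Hmeta.
Qed.

Lemma D_br d d' : Dset d -> Dset d' -> br d d' = 0.
Proof.
move=> Hd Hd'; elim: Hd.
- by move=> i j; apply: D_br_brk.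
- exact: (lin0 (brl_lin _)).
- by move=> x y _ Hx _ Hy; rewrite (linD (brl_lin _)) Hx Hy addr0.
- by move=> c x _ Hx; rewrite (linZ (brl_lin _)) Hx scaler0.
- by move=> i x _ _; apply: D_br_brk.
Qed.

Lemma D_comm i j d : Dset d -> br (e i) (br (e j) d) = br (e j) (br (e i) d).
Proof.
move=> Hd; have := br_jac (e i) (e j) d.
rewrite (D_br Hd (D_gen i j)) addr0.
rewrite (@br_anti d (e i)) (linN (brr_lin _)) => /eqP; rewrite subr_eq0 => /eqP. by [].
Qed.

Definition Pdec (x : M) := exists c : 'I_r -> K, exists d, Dset d /\ x = \sum_j c j *: e j + d.

Lemma br_dec_D x d : Pdec x -> Dset d -> Dset (br x d).
Proof.
move=> [c [d0 [Hd0 ->]]] Hd.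
rewrite (linD (brl_lin _)) (D_br Hd0 Hd) addr0 (lin_sum (brl_lin _)).
apply: D_sum => j _; rewrite (linZ (brl_lin _)); apply: D_scale; exact: D_T.
Qed.

Lemma br_e_dec j y : Pdec y -> Dset (br (e j) y).
Proof.
move=> [c [d [Hd ->]]]; rewrite (linD (brr_lin _)) (lin_sum (brr_lin _)).
apply: D_add; last exact: D_T.
apply: D_sum => l _; rewrite (linZ (brr_lin _)); apply: D_scale; exact: D_gen.
Qed.

Lemma br_dec x y : Pdec x -> Pdec y -> Dset (br x y).
Proof.
move=> Px Py; have [c [d [Hd ->]]] := Px.
rewrite (linD (brl_lin _)) (lin_sum (brl_lin _)); apply: D_add.
  apply: D_sum => j _; rewrite (linZ (brl_lin _)); apply: D_scale.
  exact: br_e_dec.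
rewrite br_anti; apply: D_opp; exact: br_dec_D.
Qed.

Definition Pb : {pred M} := fun x => asb (Pdec x).

Lemma Pb_closed : submod_closed Pb.
Proof.
split.
  apply/asbP; exists (fun _ => 0), 0; split; first exact: D_0.
  by rewrite big1 ?addr0 // => j _; rewrite scale0r.
move=> a u v /asbP [c [d [Hd ->]]] /asbP [c' [d' [Hd' ->]]]; apply/asbP.
exists (fun j => a * c j + c' j), (a *: d + d'); split; first by apply: D_add => //; apply: D_scale.
rewrite scalerDr scaler_sumr addrACA -big_split /=; congr (_ + _).
by apply: eq_bigr => j _; rewrite scalerA scalerDl.
Qed.
HB.instance Definition _ := GRing.isSubmodClosed.Build K M Pb Pb_closed.

Inductive subP : predArgType := SubP u & u \in Pb.
Definition spval w : M := let: SubP u _ := w in u.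
HB.instance Definition _ := [isSub of subP for spval].
HB.instance Definition _ := [Choice of subP by <:].
HB.instance Definition _ := [SubChoice_isSubZmodule of subP by <:].
HB.instance Definition _ := [SubZmodule_isSubLmodule of subP by <:].

End Lie.

Section Free.
Variables (K : fieldType) (r : nat) (M : lmodType K) (br : M -> M -> M) (e : 'I_r -> M).
Hypothesis Hfree : is_free_metabelian br e.

Let Hlie : is_lie_bracket br. Proof. by case: Hfree. Qed.
Let Hmeta : is_metabelian br. Proof. by case: Hfree. Qed.

Lemma D_Pdec d : Dset br e d -> Pdec br e d.
Proof. move=> Hd; exists (fun _ => 0), d; split=> //.
by rewrite big1 ?add0r // => j _; rewrite scale0r. Qed.

Let W := subP br e.
Lemma brS_in (a b : W) : br (val a) (val b) \in Pb br e.
Proof.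
apply/asbP; apply: D_Pdec; apply: (br_dec Hlie Hmeta); [have := valP a|have := valP b]; move/asbP; by [].
Qed.
Definition brS (a b : W) : W := Sub (br (val a) (val b)) (brS_in a b).

Lemma valZD (a : K) (x y : W) : val (a *: x + y) = a *: val x + val y.
Proof. by []. Qed.

Lemma brS_lie : is_lie_bracket brS.
Proof.
have [H1 H2 H3 H4] := Hlie.
split.
- move=> a x y z; apply: val_inj; rewrite valZD /=; exact: H1.
- move=> a x y z; apply: val_inj; rewrite valZD /=; exact: H2.
- move=> x; apply: val_inj; rewrite /=; exact: H3.
- move=> x y z; apply: val_inj; rewrite /=; exact: H4.
Qed.

Lemma brS_meta : is_metabelian brS.
Proof. move=> a b c d; apply: val_inj; rewrite /=; exact: Hmeta. Qed.

Lemma e_in i : e i \in Pb br e.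
Proof.
apply/asbP; exists (fun j => (j == i)%:R), 0; split; first exact: D_0.
rewrite addr0 (bigD1 i) //= eqxx scale1r big1 ?addr0 // => j /negbTE ->.
by rewrite scale0r.
Qed.

Lemma decomp x : Pdec br e x.
Proof.
have [_ _ Hu] := Hfree.
have [[phi [Hphi Hphie]] _] := Hu W brS brS_lie brS_meta (fun i => Sub (e i) (e_in i)).
have [_ _ Hu'] := Hfree.
have [_ Huniq] := Hu' M br Hlie Hmeta e.
have E : forall y, val (phi y) = y.
  have h1 : is_lie_hom br br (fun y => val (phi y)).
    case: Hphi => H1 H2; split.
      by move=> a y z; rewrite H1.
    by move=> y z; rewrite H2.
  have h2 : is_lie_hom br br id by split.
  have h3 : forall i, val (phi (e i)) = e i by move=> i; rewrite Hphie.
  exact: (Huniq _ _ h1 h2 h3).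
have := valP (phi x); rewrite E; move/asbP. by [].
Qed.

Lemma indep (c : 'I_r -> K) d : Dset br e d -> \sum_j c j *: e j + d = 0 ->
  (forall j, c j = 0) /\ d = 0.
Proof.
move=> Hd E.
pose W2 := 'rV[K]_r.
pose brW (x y : W2) : W2 := 0.
have l1 : is_lie_bracket brW.
  by split; rewrite /brW // => *; rewrite ?scaler0 ?addr0.
have l2 : is_metabelian brW by [].
have [_ _ Hu] := Hfree.
have [[phi [[Hl Hb] He]] _] := Hu W2 brW l1 l2 (fun i => delta_mx 0 i).
have phi0 : phi 0 = 0.
  have := Hl 1 0 0; rewrite !scale1r addr0 => E0.
  by apply: (addrI (phi 0)); rewrite addr0 -E0.
have phiD : forall x y, phi (x + y) = phi x + phi y.
  by move=> x y; have := Hl 1 x y; rewrite !scale1r.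
have phiZ : forall a x, phi (a *: x) = a *: phi x.
  by move=> a x; have := Hl a x 0; rewrite !addr0 phi0 addr0.
have phiDs : phi d = 0.
  elim: Hd.
  - by move=> i j; rewrite Hb.
  - exact: phi0.
  - by move=> x y _ Hx _ Hy; rewrite phiD Hx Hy addr0.
  - by move=> a x _ Hx; rewrite phiZ Hx scaler0.
  - by move=> i x _ _; rewrite Hb.
have Hsum : phi (\sum_j c j *: e j) = \sum_j c j *: delta_mx 0 j.
  rewrite (big_morph phi phiD phi0); apply: eq_bigr => j _; by rewrite phiZ He.
have Ec : forall j, c j = 0.
  move=> j; have := congr1 phi E; rewrite phiD Hsum phiDs addr0 phi0 => /rowP /(_ j).
  rewrite !mxE summxE (bigD1 j) //= big1 => [|k kj]; last first.
    by rewrite !mxE eq_sym (negbTE kj) andbF mulr0.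
  by rewrite !mxE !eqxx mulr1 addr0.
split=> //; move: E; rewrite big1 ?add0r // => j _; by rewrite Ec scale0r.
Qed.
End Free.

Section Main.
Variables (K : fieldType) (r : nat) (M : lmodType K) (br : M -> M -> M) (e : 'I_r -> M) (n : nat).
Hypothesis Hfree : is_free_metabelian br e.

Let Hlie : is_lie_bracket br. Proof. by case: Hfree. Qed.
Let Hmeta : is_metabelian br. Proof. by case: Hfree. Qed.
Local Notation D := (Dset br e).

Definition A := #|{: 'I_n * 'I_r}|.
Definition RA := Q K A.
Definition RR := Q RA r.
Definition qn := (n + #|{: 'I_r * 'I_r}|)%N.
Definition avar (i : 'I_n) (l : 'I_r) : RA := varQ K A (enum_rank (i, l)).
Definition tvar (j : 'I_r) : RR := varQ RA r j.
Definition embK (c : K) : RA := embQ A c.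
Definition embR (a : RA) : RR := embQ r a.
Definition gidx (j l : 'I_r) : 'I_qn := rshift n (enum_rank (j, l)).
Definition pidx (i : 'I_n) : 'I_qn := lshift _ i.
Definition rowT := ('rV[RA]_r * 'rV[RR]_qn)%type.

Fixpoint tr (cf : M -> rowT) (t : lterm K M n) : rowT :=
  match t with
  | LConst c => cf c
  | LVar i => (\row_l avar i l, delta_mx 0 (pidx i))
  | LAdd t1 t2 => ((tr cf t1).1 + (tr cf t2).1, (tr cf t1).2 + (tr cf t2).2)
  | LScale c t1 => (embK c *: (tr cf t1).1, embR (embK c) *: (tr cf t1).2)
  | LBr t1 t2 =>
     let l1 := (tr cf t1).1 in let d1 := (tr cf t1).2 in
     let l2 := (tr cf t2).1 in let d2 := (tr cf t2).2 in
     (0, \sum_j \sum_l embR (l1 0 j * l2 0 l) *: delta_mx 0 (gidx j l)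
        + \sum_j (embR (l1 0 j) * tvar j) *: d2 - \sum_l (embR (l2 0 l) * tvar l) *: d1)
  end.

Definition alpha (cc : 'I_n -> 'I_r -> K) (j : nat) : K :=
  match (insub j : option 'I_A) with
  | Some o => let: (i, l) := enum_val o in cc i l
  | None => 0 end.
Definition Tls (j : nat) : M -> M :=
  match (insub j : option 'I_r) with Some i => br (e i) | None => id end.
Definition rA cc : RA -> M -> M := @rhoQ K M K (@sact K M) (als (alpha cc)) A.
Definition rD cc : RR -> M -> M := @rhoQ K M RA (rA cc) Tls r.
Definition uu (m : 'I_n -> M) (k : 'I_qn) : M :=
  match split k with inl i => m i | inr o => let: (j, l) := enum_val o in br (e j) (e l) end.
Definition eV cc (x : 'rV[RA]_r) : M := eps (rA cc) e x.
Definition eD cc m (x : 'rV[RR]_qn) : M := eps (rD cc) (uu m) x.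

Let T0 : (fun _ : M => True) 0. Proof. by []. Qed.
Let TD : forall x y : M, True -> True -> True. Proof. by []. Qed.
Let TZ : forall (a : K) (x : M), True -> True. Proof. by []. Qed.
Let D0 : D 0. Proof. exact: D_0. Qed.
Let DD : forall x y, D x -> D y -> D (x + y). Proof. exact: D_add. Qed.
Let DZ : forall a x, D x -> D (a *: x). Proof. exact: D_scale. Qed.

Section Goods.
Variables (U : M -> Prop) (U0 : U 0) (UD : forall x y, U x -> U y -> U (x + y))
  (UZ : forall a x, U x -> U (a *: x)) (cc : 'I_n -> 'I_r -> K).
Let gs := good_sact UZ.
Let HO : forall j, sOps U (als (alpha cc) j).
Proof. move=> j; split; last by move=> v Uv; apply: UZ.
by move=> a x y; rewrite /als scalerDr !scalerA mulrC. Qed.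
Let HU : forall j v, U v -> U (als (alpha cc) j v). Proof. by move=> j v Uv; apply: UZ. Qed.
Let HC : forall i j w, U w -> als (alpha cc) i (als (alpha cc) j w) = als (alpha cc) j (als (alpha cc) i w).
Proof. by move=> i j w _; rewrite /als !scalerA mulrC. Qed.
Lemma goodA : good U (rA cc) (OpsQ U (sOps U) (als (alpha cc)) A).
Proof. exact: (good_Q U0 UD gs HO HU HC A). Qed.
Lemma rA_emb c v : rA cc (embK c) v = c *: v.
Proof. exact: (rhoQ_emb U0 UD gs HO HU HC A c v). Qed.
Lemma rA_var i l v : rA cc (avar i l) v = cc i l *: v.
Proof.
rewrite /rA /avar (rhoQ_var U0 UD gs HO HU HC) //.
by rewrite /als /alpha valK enum_rankK.
Qed.
End Goods.

Lemma rA_scal cc a v : rA cc a v = @scQ K (alpha cc) A a *: v.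
Proof. exact: rhoQ_scal. Qed.

Section GoodD.
Variable cc : 'I_n -> 'I_r -> K.
Let gA := goodA D0 DD DZ cc.
Let HO : forall j, OpsQ D (sOps D) (als (alpha cc)) A (Tls j).
Proof.
move=> j; rewrite /Tls; case: insubP => [i _ _|_].
  split; first split.
  - exact: (brr_lin Hlie _).
  - by move=> v Dv; apply: D_T.
  - by move=> k _ w _; rewrite /als (linZ (brr_lin Hlie _)).
  - by move=> v Dv; apply: D_T.
split; first by split.
by [].
by [].
Qed.
Let HU : forall j v, D v -> D (Tls j v).
Proof. by move=> j v Dv; rewrite /Tls; case: insubP => [i _ _|_] //; apply: D_T. Qed.
Let HC : forall i j w, D w -> Tls i (Tls j w) = Tls j (Tls i w).
Proof.
move=> i j w Dw; rewrite /Tls; case: insubP => [i' _ _|_]; case: insubP => [j' _ _|_] //.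
exact: (D_comm Hlie Hmeta).
Qed.
Lemma goodD : good D (rD cc) (OpsQ D (OpsQ D (sOps D) (als (alpha cc)) A) Tls r).
Proof. exact: (good_Q D0 DD gA HO HU HC r). Qed.
Lemma rD_emb a v : rD cc (embR a) v = rA cc a v.
Proof. exact: (rhoQ_emb D0 DD gA HO HU HC r a v). Qed.
Lemma rD_var (j : 'I_r) v : rD cc (tvar j) v = br (e j) v.
Proof. by rewrite /rD /tvar (rhoQ_var D0 DD gA HO HU HC) // /Tls valK. Qed.
End GoodD.


Section Trans.
Variables (cc : 'I_n -> 'I_r -> K) (m : 'I_n -> M).
Hypothesis Hm : forall i, D (m i).

Let gAT := goodA T0 TD TZ cc.
Let gAD := goodA D0 DD DZ cc.
Let gD := goodD cc.
Let HuT : forall k : 'I_r, True. Proof. by []. Qed.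
Lemma uuD k : D (uu m k).
Proof. rewrite /uu; case: split => [i|o]; first exact: Hm. by case: enum_val => j l; apply: D_gen. Qed.

Lemma epsV_add x y : eV cc (x + y) = eV cc x + eV cc y. Proof. exact: (epsD gAT). Qed.
Lemma epsV0 : eV cc 0 = 0. Proof. exact: (eps0 gAT). Qed.
Lemma epsV_Z a x : eV cc (a *: x) = rA cc a (eV cc x). Proof. exact: (epsZ gAT HuT). Qed.
Lemma epsD_add x y : eD cc m (x + y) = eD cc m x + eD cc m y. Proof. exact: (epsD gD). Qed.
Lemma epsD0 : eD cc m 0 = 0. Proof. exact: (eps0 gD). Qed.
Lemma epsD_Z a x : eD cc m (a *: x) = rD cc a (eD cc m x). Proof. exact: (epsZ gD uuD). Qed.
Lemma epsD_U x : D (eD cc m x). Proof. exact: (epsU D0 DD gD uuD). Qed.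
Lemma epsD_N x : eD cc m (- x) = - eD cc m x.
Proof. by apply/eqP; rewrite -addr_eq0 -epsD_add addNr epsD0. Qed.
Lemma epsD_sum (I : Type) (s : seq I) (P : pred I) (F : I -> 'rV[RR]_qn) :
  eD cc m (\sum_(i <- s | P i) F i) = \sum_(i <- s | P i) eD cc m (F i).
Proof. exact: (big_morph _ epsD_add epsD0). Qed.
Lemma epsD_delta k : eD cc m (delta_mx 0 k) = uu m k.
Proof. exact: (eps_delta gD). Qed.

Lemma br_suml (I : Type) (s : seq I) (P : pred I) (F : I -> M) y :
  br (\sum_(i <- s | P i) F i) y = \sum_(i <- s | P i) br (F i) y.
Proof. exact: (lin_sum (brl_lin Hlie y)). Qed.
Lemma br_sumr (I : Type) (s : seq I) (P : pred I) (F : I -> M) y :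
  br y (\sum_(i <- s | P i) F i) = \sum_(i <- s | P i) br y (F i).
Proof. exact: (lin_sum (brr_lin Hlie y)). Qed.

Lemma brA_l a x y : br (rA cc a x) y = rA cc a (br x y).
Proof. by rewrite !rA_scal (linZ (brl_lin Hlie _)). Qed.
Lemma brA_r a x y : br x (rA cc a y) = rA cc a (br x y).
Proof. by rewrite !rA_scal (linZ (brr_lin Hlie _)). Qed.

Variable cf : M -> rowT.
Hypothesis Hcf : forall c, c = eV cc (cf c).1 + eD cc m (cf c).2.
Variable p : 'I_n -> M.
Hypothesis Hp : forall i, p i = \sum_l cc i l *: e l + m i.

Lemma tr_ok t : leval br p t = eV cc (tr cf t).1 + eD cc m (tr cf t).2.
Proof.
elim: t => [c|i|t1 IH1 t2 IH2|c t1 IH1|t1 IH1 t2 IH2] /=.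
- exact: Hcf.
- rewrite Hp epsD_delta /uu /pidx (unsplitK (inl i : 'I_n + 'I__)); congr (_ + _).
  by rewrite /eV /eps; apply: eq_bigr => l _; rewrite mxE (rA_var T0 TD TZ).
- by rewrite IH1 IH2 epsV_add epsD_add addrACA.
- rewrite IH1 epsV_Z epsD_Z rD_emb !(rA_emb T0 TD TZ). by rewrite scalerDr.
- rewrite IH1 IH2 epsV0 add0r.
  move: (tr cf t1) (tr cf t2) => [l1 d1] [l2 d2] /=.
  have X1D := epsD_U d1; have X2D := epsD_U d2.
  have E2 : forall (l : 'rV[RA]_r) X, D X -> br (eV cc l) X = \sum_j rA cc (l 0 j) (br (e j) X).
    move=> l X _; rewrite /eV /eps br_suml; apply: eq_bigr => j _; by rewrite brA_l.
  have E1 : br (eV cc l1) (eV cc l2) = \sum_j \sum_l rA cc (l1 0 j * l2 0 l) (br (e j) (e l)).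
    rewrite {1}/eV /eps br_suml; apply: eq_bigr => j _; rewrite brA_l /eV /eps br_sumr.
    rewrite (lin_sum (g_lin gAT _)); apply: eq_bigr => l _.
    by rewrite brA_r (g_mul gAT).
  rewrite (linD (brl_lin Hlie _)) !(linD (brr_lin Hlie _)) (D_br Hlie Hmeta X1D X2D) addr0.
  rewrite (br_anti Hlie (eD cc m d1) (eV cc l2)) E1 E2 // E2 //.
  rewrite epsD_add epsD_N epsD_add !epsD_sum.
  congr (_ + _ - _).
  - apply: eq_bigr => j _; rewrite epsD_sum; apply: eq_bigr => l _.
    rewrite epsD_Z epsD_delta rD_emb /uu /gidx (unsplitK (inr _ : 'I_n + 'I__)) enum_rankK.
    by [].
  - apply: eq_bigr => j _; rewrite epsD_Z (g_mul gD) // rD_emb rD_var. by [].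
  - apply: eq_bigr => j _; rewrite epsD_Z (g_mul gD) // rD_emb rD_var. by [].
Qed.
End Trans.


Lemma D_rep d : D d -> exists dl : 'rV[RR]_qn,
  forall cc m, (forall i, D (m i)) -> eD cc m dl = d.
Proof.
elim.
- move=> j l; exists (delta_mx 0 (gidx j l)) => cc m Hm.
  by rewrite epsD_delta /uu /gidx (unsplitK (inr _ : 'I_n + 'I__)) enum_rankK.
- by exists 0 => cc m Hm; rewrite epsD0.
- move=> x y _ [dx Hx] _ [dy Hy]; exists (dx + dy) => cc m Hm.
  by rewrite epsD_add Hx // Hy.
- move=> a x _ [dx Hx]; exists (embR (embK a) *: dx) => cc m Hm.
  by rewrite (epsD_Z _ Hm) rD_emb (rA_emb T0 TD TZ) Hx.
- move=> j x _ [dx Hx]; exists (tvar j *: dx) => cc m Hm.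
  by rewrite (epsD_Z _ Hm) rD_var Hx.
Qed.

Lemma const_rep c : exists y : rowT,
  forall cc m, (forall i, D (m i)) -> c = eV cc y.1 + eD cc m y.2.
Proof.
have [c0 [d [Hd ->]]] := decomp Hfree c.
have [dl Hdl] := D_rep Hd.
exists (\row_j embK (c0 j), dl) => cc m Hm /=; rewrite Hdl //; congr (_ + _).
by rewrite /eV /eps; apply: eq_bigr => j _; rewrite mxE (rA_emb T0 TD TZ).
Qed.

Lemma split_eq cc (m : 'I_n -> M) (Hm : forall i, D (m i)) (l : 'rV[RA]_r) (dl : 'rV[RR]_qn) :
  eV cc l + eD cc m dl = 0 <-> eV cc l = 0 /\ eD cc m dl = 0.
Proof.
split; last by case=> -> ->; rewrite addr0.
have -> : eV cc l = \sum_j (@scQ K (alpha cc) A (l 0 j)) *: e j.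
  by rewrite /eV /eps; apply: eq_bigr => j _; rewrite rA_scal.
move=> E; have [Hc Hd] := indep Hfree (epsD_U _ Hm dl) E.
split=> //; rewrite big1 // => j _; by rewrite Hc scale0r.
Qed.

Lemma point_dec (p : 'I_n -> M) : exists cc : 'I_n -> 'I_r -> K, exists m : 'I_n -> M,
  (forall i, D (m i)) /\ forall i, p i = \sum_l cc i l *: e l + m i.
Proof.
pose f i := constructive_indefinite_description _ (decomp Hfree (p i)).
pose g i := constructive_indefinite_description _ (proj2_sig (f i)).
exists (fun i => proj1_sig (f i)), (fun i => proj1_sig (g i)); split=> i.
  by case: (proj2_sig (g i)).
by case: (proj2_sig (g i)).
Qed.

Lemma eV_gen cc (S : 'rV[RA]_r -> Prop) : (forall x, S x -> eV cc x = 0) ->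
  forall x, gen S x -> eV cc x = 0.
Proof. by apply: (eps_gen (goodA T0 TD TZ cc)). Qed.

Lemma eD_gen cc m (Hm : forall i, D (m i)) (S : 'rV[RR]_qn -> Prop) :
  (forall x, S x -> eD cc m x = 0) -> forall x, gen S x -> eD cc m x = 0.
Proof. by apply: (eps_gen (goodD cc)); apply: uuD. Qed.

End Main.

Theorem lemma2p4 (K : fieldType) (r : nat) (hr : (0 < r)%N)
  (M : lmodType K) (br : M -> M -> M) (e : 'I_r -> M) :
  is_free_metabelian br e ->
  forall (n : nat) (S : lterm K M n -> Prop),
    exists S0 : seq (lterm K M n),
      (forall t, lmem S0 t -> S t) /\
      (forall p : 'I_n -> M,
         variety br S p <-> variety br (fun t => lmem S0 t) p).
Proof.
move=> Hfree n S.
pose cf c := proj1_sig (constructive_indefinite_description _ (const_rep n Hfree c)).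
have Hcf : forall c cc m, (forall i, Dset br e (m i)) ->
    c = eV e cc (cf c).1 + eD br e cc m (cf c).2.
  by move=> c cc m Hm; rewrite /cf; case: constructive_indefinite_description => y Hy /=; apply: Hy.
have NSA : NS (RA K r n)^o by apply: NS_Q; apply: NS_field.
have NS1 : NS 'rV[RA K r n]_r by apply: NS_rows.
have NS2 : NS 'rV[RR K r n]_(qn r n) by apply: NS_rows; apply: NS_Q.
pose Lam l := exists t, S t /\ (tr cf t).1 = l.
pose Del l := exists t, S t /\ (tr cf t).2 = l.
have [ls1 [H11 H12]] := NS1 Lam.
have [ls2 [H21 H22]] := NS2 Del.
have [T1 [HT1 HT1']] := choose_list (P := fun l t => S t /\ (tr cf t).1 = l) H11.
have [T2 [HT2 HT2']] := choose_list (P := fun l t => S t /\ (tr cf t).2 = l) H21.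
have HS0 : forall t, lmem (T1 ++ T2) t -> S t.
  move=> t /lmem_cat [/HT1' [a _ [St _]] | /HT2' [a _ [St _]]]; exact: St.
exists (T1 ++ T2); split=> // p; split.
  by move=> H t /HS0 /H.
move=> H0 t St.
have [cc [m [Hm Hp]]] := point_dec Hfree p.
have ok := tr_ok Hfree Hm (fun c => Hcf c cc m Hm) Hp.
have Z : forall t', lmem (T1 ++ T2) t' ->
    eV e cc (tr cf t').1 = 0 /\ eD br e cc m (tr cf t').2 = 0.
  by move=> t' Ht'; apply/(split_eq Hfree cc Hm); rewrite -ok; apply: H0.
rewrite ok; apply/(split_eq Hfree cc Hm); split.
  apply: (eV_gen (S := fun y => y \in ls1)) (H12 _ (ex_intro _ t (conj St erefl))).
  move=> x /HT1 [t' Ht' [_ <-]]; by case: (Z t' (proj2 (lmem_cat _ _ _) (or_introl Ht'))).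
apply: (eD_gen Hfree Hm (S := fun y => y \in ls2)) (H22 _ (ex_intro _ t (conj St erefl))).
move=> x /HT2 [t' Ht' [_ <-]]; by case: (Z t' (proj2 (lmem_cat _ _ _) (or_intror Ht'))).
Qed.
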